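(* In the mirror triangle method with inexact directional derivatives (see context), for every $u\in\mathbb{R}^n$ and $k\ge0$, with $R_k=\|u_k-u\|_L$ and $M_k=\|\nabla f(y_{k+1})\|_2$, $$A_{k+1}\mathbb{E}_{k+1}f(x_{k+1})-A_kf(x_k)+\mathbb{E}_{k+1}V(u,u_{k+1})-V(u,u_k)\le\alpha_{k+1}f(u)+\frac{A_{k+1}}L\delta^2+A_{k+1}\delta\frac{M_k}{L\sqrt n}+\alpha_{k+1}\delta\frac{\sqrt n}{\sqrt L}R_k.$$
   Context: $\mathbb{E}_{k+1}$ denotes conditional expectation over the randomness of iteration $k+1$ given iterations $1,\dots,k$. $f:\mathbb{R}^n\to\mathbb{R}$ is convex, differentiable, with $\|\nabla f(x)-\nabla f(y)\|_2\le L\|x-y\|_2$. $\|x\|_L^2=L\sum_ix_i^2$, $V(x,y)=\frac12\|x-y\|_L^2$. For each $k\ge0$, $e_{k+1}$ is a random vector on the Euclidean unit sphere such that, conditionally on previous iterations, $\mathbb{E}[e_{k+1}^ie_{k+1}^j]=0$ for $i\ne j$ and $\mathbb{E}[(e_{k+1}^i)^2]=\frac1n$; $\tilde\delta_{k+1}$ is random with $|\tilde\delta_{k+1}|\le\delta$; $\tilde\nabla f(y)=n(\langle\nabla f(y),e_{k+1}\rangle+\tilde\delta_{k+1})e_{k+1}$. Method: $x_0=u_0=y_0$, $\alpha_0=1-\frac1n$, $A_0=\alpha_0$; for $k\ge0$: $\alpha_{k+1}=\frac{k+2n}{2n^2}$, $A_{k+1}=A_k+\alpha_{k+1}$, $y_{k+1}=\frac{\alpha_{k+1}u_k+A_kx_k}{A_{k+1}}$,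 $u_{k+1}=\arg\min_{x\in\mathbb{R}^n}\{V(x,u_k)+\alpha_{k+1}\langle\tilde\nabla f(y_{k+1}),x\rangle\}$, $x_{k+1}=y_{k+1}+n\frac{\alpha_{k+1}}{A_{k+1}}(u_{k+1}-u_k)$. *)

(* Defs.v *)
From HB Require Import structures.
From mathcomp Require Import all_boot all_order all_algebra.
From mathcomp Require Import all_classical all_reals all_analysis.
Set Implicit Arguments. Unset Strict Implicit. Unset Printing Implicit Defensive.
Import Order.TTheory GRing.Theory Num.Theory.
Import numFieldNormedType.Exports.
Local Open Scope ring_scope.

Section MTM.
Variable R : realType.
Variable n : nat.

Definition dot (a b : 'rV[R]_n) : R := \sum_(i < n) a 0 i * b 0 i.
Definition norm2 (a : 'rV[R]_n) : R := Num.sqrt (\sum_(i < n) a 0 i ^+ 2).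
Definition normL (L : R) (a : 'rV[R]_n) : R := Num.sqrt (L * \sum_(i < n) a 0 i ^+ 2).
Definition Vdist (L : R) (x y : 'rV[R]_n) : R := 2^-1 * normL L (x - y) ^+ 2.

Definition alpha (k : nat) : R :=
  if k is k'.+1 then (k'%:R + 2 * n%:R) / (2 * n%:R ^+ 2) else 1 - n%:R^-1.
Definition Acoef (k : nat) : R := \sum_(j < k.+1) alpha j.

Definition ystep (k : nat) (x u : 'rV[R]_n) : 'rV[R]_n :=
  (Acoef k.+1)^-1 *: (alpha k.+1 *: u + Acoef k *: x).
(* inexact directional-derivative gradient estimate n(<grad f(y), e> + delta~) e *)
Definition gtilde (grad : 'rV[R]_n -> 'rV[R]_n) (y e : 'rV[R]_n) (d : R) : 'rV[R]_n :=
  (n%:R * (dot (grad y) e + d)) *: e.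
Definition is_mirror_step (L a : R) (g u u' : 'rV[R]_n) : Prop :=
  forall x, Vdist L u' u + a * dot g u' <= Vdist L x u + a * dot g x.
Definition xstep (k : nat) (y u u' : 'rV[R]_n) : 'rV[R]_n :=
  y + (n%:R * alpha k.+1 / Acoef k.+1) *: (u' - u).

(* A realization of the first k iterations of the method, driven by the
   realized random directions es (j+1) and errors ds (j+1), j < k. *)
Definition mtm_history (L delta : R) (grad : 'rV[R]_n -> 'rV[R]_n)
    (xs us es : nat -> 'rV[R]_n) (ds : nat -> R) (k : nat) : Prop :=
  xs 0%N = us 0%N /\
  forall j, (j < k)%N ->
    [/\ norm2 (es j.+1) = 1, `|ds j.+1| <= delta,
        is_mirror_step L (alpha j.+1)
          (gtilde grad (ystep j (xs j) (us j)) (es j.+1) (ds j.+1)) (us j) (us j.+1)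
      & xs j.+1 = xstep j (ystep j (xs j) (us j)) (us j) (us j.+1)].

End MTM.
Arguments alpha {R} n k.
Arguments Acoef {R} n k.

(* Main.v *)
Require Import Defs.
From HB Require Import structures.
From mathcomp Require Import all_boot all_order all_algebra.
From mathcomp Require Import all_classical all_reals all_analysis.
From mathcomp Require Import ring lra.
Import Order.TTheory GRing.Theory Num.Theory.
Import numFieldNormedType.Exports.
Local Open Scope classical_set_scope.
Local Open Scope ring_scope.

Set Implicit Arguments. Unset Strict Implicit.



Section S.
Variables (R : realType) (n : nat).
Implicit Types (a b c h : 'rV[R]_n).

Definition sq a : R := \sum_(i < n) a 0 i ^+ 2.

Lemma sq_ge0 a : 0 <= sq a.
Proof. by apply: sumr_ge0 => i _; exact: sqr_ge0. Qed.

Lemma norm2_sq a : norm2 a ^+ 2 = sq a.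
Proof. by rewrite /norm2 sqr_sqrtr // sq_ge0. Qed.

Lemma norm2_ge0 a : 0 <= norm2 a.
Proof. exact: sqrtr_ge0. Qed.

Lemma sq0 a : sq a = 0 -> forall b, dot a b = 0.
Proof.
move=> H b; rewrite /dot; apply: big1 => i _.
have := @psumr_eq0P _ _ xpredT (fun i => a 0 i ^+ 2) (fun i _ => sqr_ge0 _) H i isT.
by move/eqP; rewrite sqrf_eq0 => /eqP ->; rewrite mul0r.
Qed.

Lemma dotC a b : dot a b = dot b a.
Proof. by apply: eq_bigr => i _; rewrite mulrC. Qed.

Lemma dotBl a b c : dot (a - b) c = dot a c - dot b c.
Proof. by rewrite /dot -sumrB; apply: eq_bigr => i _; rewrite !mxE mulrBl. Qed.

Lemma dotDl a b c : dot (a + b) c = dot a c + dot b c.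
Proof. by rewrite /dot -big_split; apply: eq_bigr => i _; rewrite !mxE mulrDl. Qed.

Lemma dotZl t a b : dot (t *: a) b = t * dot a b.
Proof. by rewrite /dot mulr_sumr; apply: eq_bigr => i _; rewrite !mxE mulrA. Qed.

Lemma dotNl a b : dot (- a) b = - dot a b.
Proof. by rewrite -scaleN1r dotZl mulN1r. Qed.

Lemma dotBr a b c : dot c (a - b) = dot c a - dot c b.
Proof. by rewrite dotC dotBl !(dotC c). Qed.

Lemma dotZr t a b : dot b (t *: a) = t * dot b a.
Proof. by rewrite dotC dotZl dotC. Qed.

Lemma dotaa a : dot a a = sq a.
Proof. by apply: eq_bigr => i _; rewrite expr2. Qed.

Lemma sqZ t a : sq (t *: a) = t ^+ 2 * sq a.
Proof. by rewrite /sq mulr_sumr; apply: eq_bigr => i _; rewrite !mxE exprMn. Qed.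

Lemma norm2Z t a : norm2 (t *: a) = `|t| * norm2 a.
Proof. by rewrite /norm2 -/(sq _) sqZ sqrtrM ?sqr_ge0 // sqrtr_sqr. Qed.

Lemma CS a b : dot a b <= norm2 a * norm2 b.
Proof.
have [A0|A0] := eqVneq (sq a) 0.
  by rewrite sq0 // mulr_ge0 // norm2_ge0.
have [B0|B0] := eqVneq (sq b) 0.
  by rewrite dotC sq0 // mulr_ge0 // norm2_ge0.
set x := norm2 a; set y := norm2 b.
have xp : 0 < x by rewrite /x /norm2 sqrtr_gt0 lt0r A0 sq_ge0.
have yp : 0 < y by rewrite /y /norm2 sqrtr_gt0 lt0r B0 sq_ge0.
have H : 0 <= sq (y *: a - x *: b) by exact: sq_ge0.
rewrite -dotaa !dotBl !dotBr !dotZl !dotZr (dotC b a) !dotaa in H.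
rewrite -!norm2_sq -/x -/y in H.
move: H; set D := dot a b => H.
have H2 : 0 <= x * y * (2 * (x * y - D)).
  suff -> : x * y * (2 * (x * y - D)) = y * (y * x ^+ 2) - y * (x * D) - (x * (y * D) - x * (x * y ^+ 2)) by [].
  ring.
rewrite pmulr_rge0 ?mulr_gt0 // in H2.
lra.
Qed.
Lemma deriv_line (f : 'rV[R]_n -> R) (grad : 'rV[R]_n -> 'rV[R]_n)
  (Hd : forall y, differentiable f y /\ forall h, 'd f y h = dot (grad y) h)
  (y h : 'rV[R]_n) (t : R) :
  derivable (fun t : R => f (y + t *: h)) t 1 /\
  derive1 (fun t => f (y + t *: h)) t = dot (grad (y + t *: h)) h.
Proof.
set phi := (fun t : R => f (y + t *: h)).
have E : (fun s : R => s^-1 *: ((phi \o shift t) (s *: 1) - phi t)) =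
   (fun s : R => s^-1 *: ((f \o shift (y + t *: h)) (s *: h) - f (y + t *: h))).
  apply: funext => s /=; rewrite /phi /shift /= [s%:A]mulr1 scalerDl.
  congr (_ *: (f _ - _)). rewrite addrCA. done.
split.
  by rewrite /derivable E; apply: diff_derivable; exact: (Hd _).1.
rewrite derive1E /derive E -/(derive f (y + t *: h) h) deriveE.
  exact: (Hd _).2.
exact: (Hd _).1.
Qed.
End S.



Section S.
Variables (R : realType) (n : nat).

Lemma nincr01 (psi : R -> R) : (forall t, derivable psi t 1) ->
  (forall t, 0 < t < 1 -> derive1 psi t <= 0) -> psi 1 <= psi 0.
Proof.
move=> d dle.
have := @ler0_derive1_le_cc R psi 0 1 (fun x _ => d x).
move=> /(_ _ (derivable_within_continuous (fun x _ => d x))).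
apply.
- move=> x; rewrite in_itv /= => /andP[? ?]; apply: dle; lra.
- by rewrite in_itv /= lexx ler01.
- by rewrite in_itv /= lexx ler01.
- exact: ler01.
Qed.

Lemma polyder (c d t : R) :
  is_derive t (1:R) (c \*: (@id R) + d \*: ((@id R) ^+ 2)) (c + 2 * t * d).
Proof.
apply: is_derive_eq. rewrite /= expr1 /GRing.scale /= !mulr1. ring.
Qed.



Lemma descent_up (f : 'rV[R]_n -> R) (grad : 'rV[R]_n -> 'rV[R]_n) (L : R)
  (Hd : forall y, differentiable f y /\ forall h, 'd f y h = dot (grad y) h)
  (HL : forall x y, norm2 (grad x - grad y) <= L * norm2 (x - y))
  (y h : 'rV[R]_n) :
  f (y + h) <= f y + dot (grad y) h + L / 2 * sq h.
Proof.
set c := dot (grad y) h; set d := L / 2 * sq h.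
pose phi := fun t : R => f (y + t *: h).
pose q := c \*: (@id R) + d \*: ((@id R) ^+ 2).
have H := @nincr01 (phi - q).
have Hder t : derivable (phi - q) t 1.
  apply: derivableB; first exact: (deriv_line Hd y h t).1.
  by case: (polyder c d t).
have qE s : q s = c * s + d * s ^+ 2.
  by rewrite /q !fctE.
have := H Hder.
have -> : (phi - q) 1 = f (y + h) - (c + d).
  by rewrite !fctE qE /phi scale1r mulr1 expr1n mulr1.
have -> : (phi - q) 0 = f y.
  by rewrite !fctE qE /phi scale0r addr0 mulr0 expr0n mulr0 addr0 subr0.
move=> Hf; suff : f (y + h) - (c + d) <= f y by lra.
apply: Hf => t /andP[t0 t1].
have dphi : derivable phi t 1 by exact: (deriv_line Hd y h t).1.
have dq : derivable q t 1 by case: (polyder c d t).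
rewrite derive1E (deriveB dphi dq).
rewrite -derive1E (deriv_line Hd y h t).2 (@derive_val _ _ _ _ _ _ _ (polyder c d t)).
have E : dot (grad (y + t *: h)) h = dot (grad (y + t *: h) - grad y) h + c.
  by rewrite dotBl /c; ring.
rewrite E.
have HC := CS (grad (y + t *: h) - grad y) h.
have HL' := HL (y + t *: h) y.
rewrite (_ : y + t *: h - y = t *: h) in HL'; last by rewrite addrC addKr.
rewrite norm2Z ger0_norm in HL'; last exact: ltW.
have HN := norm2_ge0 h. have HS := norm2_sq h.
move: HC HL' HN HS.
set D := dot _ _. set G := norm2 (_ - _). set N := norm2 h.
move=> HC HL' HN HS.
rewrite /d -HS.
have : G * N <= L * (t * N) * N by rewrite ler_wpM2r.
move=> ?; nra.
Qed.




Lemma descent_low (f : 'rV[R]_n -> R) (grad : 'rV[R]_n -> 'rV[R]_n) (L : R)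
  (Hd : forall y, differentiable f y /\ forall h, 'd f y h = dot (grad y) h)
  (HL : forall x y, norm2 (grad x - grad y) <= L * norm2 (x - y))
  (y h : 'rV[R]_n) :
  f y + dot (grad y) h - L / 2 * sq h <= f (y + h).
Proof.
set c := dot (grad y) h; set d := L / 2 * sq h.
pose phi := fun t : R => f (y + t *: h).
pose q := c \*: (@id R) + (- d) \*: ((@id R) ^+ 2).
have H := @nincr01 (q - phi).
have Hder t : derivable (q - phi) t 1.
  apply: derivableB; last exact: (deriv_line Hd y h t).1.
  by case: (polyder c (- d) t).
have qE s : q s = c * s + (- d) * s ^+ 2.
  by rewrite /q !fctE.
have := H Hder.
have -> : (q - phi) 1 = (c - d) - f (y + h).
  by rewrite !fctE qE /phi scale1r mulr1 expr1n mulr1.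
have -> : (q - phi) 0 = - f y.
  by rewrite !fctE qE /phi scale0r addr0 mulr0 expr0n mulr0 addr0 sub0r.
move=> Hf; suff : c - d - f (y + h) <= - f y by lra.
apply: Hf => t /andP[t0 t1].
have dphi : derivable phi t 1 by exact: (deriv_line Hd y h t).1.
have dq : derivable q t 1 by case: (polyder c (- d) t).
rewrite derive1E (deriveB dq dphi).
rewrite (@derive_val _ _ _ _ _ _ _ (polyder c (- d) t)) -derive1E (deriv_line Hd y h t).2.
have HC := CS (grad y - grad (y + t *: h)) h.
have HL' := HL y (y + t *: h).
rewrite (_ : y - (y + t *: h) = (- t) *: h) in HL'; last by rewrite opprD addrA subrr add0r scaleNr.
rewrite norm2Z normrN ger0_norm in HL'; last exact: ltW.
rewrite dotBl -/c in HC.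
have HN := norm2_ge0 h. have HS := norm2_sq h.
move: HC HL' HN HS.
set D := dot (grad (y + t *: h)) h. set G := norm2 (_ - _). set N := norm2 h.
move=> HC HL' HN HS.
rewrite /d -HS.
have : G * N <= L * (t * N) * N by rewrite ler_wpM2r.
move=> ?; nra.
Qed.


Lemma conv_grad (f : 'rV[R]_n -> R) (grad : 'rV[R]_n -> 'rV[R]_n) (L : R)
  (L0 : 0 <= L)
  (Hc : forall (x y : 'rV[R]_n) (t : R), 0 <= t <= 1 ->
      f (t *: x + (1 - t) *: y) <= t * f x + (1 - t) * f y)
  (Hd : forall y, differentiable f y /\ forall h, 'd f y h = dot (grad y) h)
  (HL : forall x y, norm2 (grad x - grad y) <= L * norm2 (x - y))
  (y z : 'rV[R]_n) :
  f y + dot (grad y) (z - y) <= f z.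
Proof.
set c := dot (grad y) (z - y).
have key t : 0 < t <= 1 -> c - L / 2 * t * sq (z - y) <= f z - f y.
  move=> /andP[t0 t1].
  have H1 := Hc z y t.
  rewrite (_ : t *: z + (1 - t) *: y = y + t *: (z - y)) in H1; last first.
    by rewrite scalerBl scale1r scalerBr addrCA.
  have H2 := descent_low Hd HL y (t *: (z - y)).
  rewrite dotZr sqZ -/c in H2.
  have H3 : t * c - L / 2 * (t ^+ 2 * sq (z - y)) <= t * (f z - f y).
    have H1p : 0 <= t <= 1 by rewrite t1 ltW.
    have := H1 H1p. lra.
  have H4 : t * (c - L / 2 * t * sq (z - y)) <= t * (f z - f y).
    by move: H3; congr (_ <= _); ring.
  by rewrite ler_pM2l in H4.
suff : c <= f z - f y by lra.
rewrite leNgt; apply/negP => He0.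
have He : 0 < c - (f z - f y) by lra.
set e := c - (f z - f y) in He.
have S0 := sq_ge0 (z - y).
set S := sq (z - y) in key S0.
have LS0 : 0 <= L * S by rewrite mulr_ge0.
set t := e / (e + L * S + 1).
have den : 0 < e + L * S + 1 by lra.
have t0 : 0 < t by rewrite divr_gt0.
have t1 : t <= 1 by rewrite ler_pdivrMr // mul1r; lra.
have := key t; rewrite t0 t1 => /(_ isT).
have : t * (L * S) < e.
  rewrite /t mulrAC ltr_pdivrMr //.
  nra.
have eE : e = c - (f z - f y) by [].
move=> H5 H6.
have : L / 2 * t * S = (t * (L * S)) / 2 by rewrite mulrC; ring.
lra.
Qed.

End S.



Section Int.
Context (R : realType) (d : measure_display) (T : measurableType d).
Variable mu : {measure set T -> \bar R}.

Lemma ge0_le_integral_nm (g h : T -> \bar R) :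
  (forall x, 0 <= g x)%E -> (forall x, g x <= h x)%E ->
  (\int[mu]_x g x <= \int[mu]_x h x)%E.
Proof.
move=> g0 gh.
have h0 x : (0 <= h x)%E by apply: le_trans (g0 x) (gh x).
rewrite !ge0_integralTE //; apply: ereal_sup_le => _ [s Hs <-]; exists s => //=.
by move=> x; apply: le_trans (Hs x) (gh x).
Qed.

Lemma le_integral_nm (g h : T -> \bar R) :
  (forall x, g x <= h x)%E -> (\int[mu]_x g x <= \int[mu]_x h x)%E.
Proof.
move=> gh; rewrite (integralE _ _ g) (integralE _ _ h); apply: leeB.
- apply: ge0_le_integral_nm => x; first exact: funepos_ge0.
  by apply: (@funepos_le _ _ setT) => //; rewrite inE.
- apply: ge0_le_integral_nm => x; first exact: funeneg_ge0.
  by apply: (@funeneg_le _ _ setT) => //; rewrite inE.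
Qed.


End Int.

Section Prob.
Context (R : realType) (d : measure_display) (T : measurableType d).
Variable P : probability T R.

Definition nice (h : T -> R) :=
  measurable_fun setT h /\ exists M, forall w, `|h w| <= M.

Lemma nice_int h : nice h -> P.-integrable setT (EFin \o h).
Proof.
move=> [mh [M HM]]; apply: measurable_bounded_integrable => //.
  by apply: (le_lt_trans (probability_le1 P measurableT)); exact: ltry.
exists M; split; first exact: num_real.
by move=> M' HM' x _; apply: le_trans (HM x) (ltW HM').
Qed.

Lemma nice_cst c : nice (fun=> c).
Proof. by split; [exact: measurable_cst | exists `|c|]. Qed.

Lemma nice_add h1 h2 : nice h1 -> nice h2 -> nice (fun w => h1 w + h2 w).
Proof.
move=> [m1 [M1 H1]] [m2 [M2 H2]]; split; first exact: measurable_realfun.measurable_funD.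
exists (M1 + M2) => w; apply: le_trans (ler_normD _ _) _; exact: lerD.
Qed.

Lemma nice_mul h1 h2 : nice h1 -> nice h2 -> nice (fun w => h1 w * h2 w).
Proof.
move=> [m1 [M1 H1]] [m2 [M2 H2]]; split; first exact: measurable_realfun.measurable_funM.
exists (M1 * M2) => w; rewrite normrM; apply: ler_pM => //.
Qed.

Lemma nice_opp h : nice h -> nice (fun w => - h w).
Proof.
move=> [m1 [M1 H1]]; split; first exact: measurableT_comp.
by exists M1 => w; rewrite normrN.
Qed.

Lemma nice_sqr h : nice h -> nice (fun w => h w ^+ 2).
Proof.
move=> nh; under [X in nice X]funext do rewrite expr2; exact: nice_mul.
Qed.

Lemma nice_abs h : nice h -> nice (fun w => `|h w|).
Proof.
move=> [m1 [M1 H1]]; split; first exact: measurableT_comp.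
by exists M1 => w; rewrite normr_id.
Qed.

Lemma nice_sum (I : Type) (s : seq I) (F : I -> T -> R) :
  (forall i, nice (F i)) -> nice (fun w => \sum_(i <- s) F i w).
Proof.
move=> HF; elim: s => [|i s IH].
  by under [X in nice X]funext do rewrite big_nil; exact: nice_cst.
under [X in nice X]funext do rewrite big_cons.
exact: nice_add.
Qed.

Lemma RintE h : nice h -> (\int[P]_w (h w)%:E = (\int[P]_w h w)%:E)%E.
Proof.
move=> /nice_int hi; rewrite /Rintegral fineK //.
exact: integrable_fin_num.
Qed.

Lemma RintD h1 h2 : nice h1 -> nice h2 ->
  \int[P]_w (h1 w + h2 w) = \int[P]_w h1 w + \int[P]_w h2 w.
Proof. by move=> /nice_int ? /nice_int ?; rewrite RintegralD. Qed.

Lemma RintZ c h : nice h -> \int[P]_w (c * h w) = c * \int[P]_w h w.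
Proof. by move=> /nice_int ?; rewrite RintegralZl. Qed.

Lemma Rintcst c : \int[P]_w c = c.
Proof.
rewrite Rintegral_cst // (_ : fine _ = 1) ?mulr1 //.
exact: (congr1 fine (@probability_setT _ _ _ P)).
Qed.

Lemma Rintle h1 h2 : nice h1 -> nice h2 -> (forall w, h1 w <= h2 w) ->
  \int[P]_w h1 w <= \int[P]_w h2 w.
Proof. by move=> /nice_int ? /nice_int ? H; apply: le_Rintegral. Qed.

Lemma Rintsum (I : Type) (s : seq I) (F : I -> T -> R) :
  (forall i, nice (F i)) ->
  \int[P]_w (\sum_(i <- s) F i w) = \sum_(i <- s) \int[P]_w F i w.
Proof.
move=> HF; elim: s => [|i s IH].
  under eq_Rintegral do rewrite big_nil. by rewrite big_nil Rintcst.
under eq_Rintegral do rewrite big_cons.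
rewrite big_cons RintD //; first by rewrite IH.
exact: nice_sum.
Qed.


Lemma Rint_lin c0 c1 c2 c3 h1 h2 h3 : nice h1 -> nice h2 -> nice h3 ->
  \int[P]_w (c0 + c1 * h1 w + c2 * h2 w + c3 * h3 w)
  = c0 + c1 * \int[P]_w h1 w + c2 * \int[P]_w h2 w + c3 * \int[P]_w h3 w.
Proof.
move=> n1 n2 n3.
have m1 : nice (fun w => c1 * h1 w) by apply: nice_mul => //; exact: nice_cst.
have m2 : nice (fun w => c2 * h2 w) by apply: nice_mul => //; exact: nice_cst.
have m3 : nice (fun w => c3 * h3 w) by apply: nice_mul => //; exact: nice_cst.
rewrite RintD //; last by apply: nice_add => //; apply: nice_add => //; exact: nice_cst.
rewrite RintD //; last by apply: nice_add => //; exact: nice_cst.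
rewrite RintD //; last exact: nice_cst.
by rewrite Rintcst !RintZ.
Qed.

Variables (n : nat) (n0 : (0 < n)%N) (e : T -> 'rV[R]_n).
Hypothesis me : forall i : 'I_n, measurable_fun setT (fun w => e w 0 i).
Hypothesis en : forall w, norm2 (e w) = 1.
Hypothesis eo : forall i j : 'I_n, i != j -> (\int[P]_w (e w 0 i * e w 0 j)%:E = 0)%E.
Hypothesis es : forall i : 'I_n, (\int[P]_w (e w 0 i ^+ 2)%:E = (n%:R^-1)%:E)%E.

Lemma abs_le_sq (x : R) : `|x| <= 1 + x ^+ 2.
Proof.
have h := sqr_ge0 (`|x| - 1); have E := real_normK (num_real x).
have := normr_ge0 x; nra.
Qed.

Lemma sq_e w : sq (e w) = 1.
Proof. by rewrite -norm2_sq en expr1n. Qed.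

Lemma nice_e i : nice (fun w => e w 0 i).
Proof.
split => //; exists 2 => w; apply: le_trans (abs_le_sq _) _.
suff : e w 0 i ^+ 2 <= 1 by move=> ?; lra.
rewrite -(sq_e w) /sq (bigD1 i) //= lerDl; apply: sumr_ge0 => j _; exact: sqr_ge0.
Qed.

Lemma nice_dot b : nice (fun w => dot b (e w)).
Proof.
rewrite /dot; apply: nice_sum => i; apply: nice_mul; [exact: nice_cst|exact: nice_e].
Qed.

Lemma E_e2 i j : \int[P]_w (e w 0 i * e w 0 j) = if i == j then n%:R^-1 else 0.
Proof.
case: eqVneq => [<-|ij].
  under eq_Rintegral do rewrite -expr2.
  by rewrite /Rintegral es.
by rewrite /Rintegral eo.
Qed.

Lemma E_dot2 b c : \int[P]_w (dot b (e w) * dot c (e w)) = dot b c / n%:R.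
Proof.
have E w : dot b (e w) * dot c (e w) =
    \sum_(i < n) \sum_(j < n) (b 0 i * c 0 j) * (e w 0 i * e w 0 j).
  rewrite /dot mulr_suml; apply: eq_bigr => i _; rewrite mulr_sumr.
  by apply: eq_bigr => j _; ring.
under eq_Rintegral do rewrite E.
rewrite Rintsum; last first.
  move=> i; apply: nice_sum => j; apply: nice_mul; first exact: nice_cst.
  by apply: nice_mul; exact: nice_e.
rewrite /dot mulr_suml; apply: eq_bigr => i _.
rewrite Rintsum; last first.
  move=> j; apply: nice_mul; first exact: nice_cst.
  by apply: nice_mul; exact: nice_e.
rewrite (bigD1 i) //= big1.
  by rewrite RintZ ?E_e2 ?eqxx ?addr0 //; apply: nice_mul; exact: nice_e.
move=> j ji; rewrite RintZ ?E_e2; last by apply: nice_mul; exact: nice_e.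
by rewrite eq_sym (negbTE ji) mulr0.
Qed.


Lemma E_abs_dot b : \int[P]_w `|dot b (e w)| <= norm2 b / Num.sqrt n%:R.
Proof.
have sn : 0 < Num.sqrt (n%:R : R) by rewrite sqrtr_gt0 ltr0n.
have [B0|B0] := eqVneq (sq b) 0.
  under eq_Rintegral do rewrite sq0 // normr0.
  by rewrite Rintcst divr_ge0 ?norm2_ge0 // ltW.
set sg := norm2 b / Num.sqrt n%:R.
have sg0 : 0 < sg.
  rewrite divr_gt0 // /norm2 sqrtr_gt0 lt0r B0 /=; exact: sq_ge0.
have sg2 : sg ^+ 2 = dot b b / n%:R.
  by rewrite /sg expr_div_n norm2_sq sqr_sqrtr ?ler0n // dotaa.
have pw w : `|dot b (e w)| <= (2 * sg)^-1 * (dot b (e w) * dot b (e w)) + sg / 2.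
  set p := dot b (e w).
  have h := sqr_ge0 (`|p| - sg); have E := real_normK (num_real p).
  have hp := normr_ge0 p.
  have -> : (2 * sg)^-1 * (p * p) + sg / 2 = (p ^+ 2 + sg ^+ 2) / (2 * sg).
    by field; rewrite gt_eqF.
  have s2 : 0 < 2 * sg by rewrite mulr_gt0.
  rewrite ler_pdivlMr //; nra.
apply: le_trans (Rintle (nice_abs (nice_dot b)) _ pw) _.
  apply: nice_add; last exact: nice_cst.
  apply: nice_mul; first exact: nice_cst.
  by apply: nice_mul; exact: nice_dot.
rewrite RintD; last exact: nice_cst.
  rewrite Rintcst RintZ; last by apply: nice_mul; exact: nice_dot.
  rewrite E_dot2 -sg2 -/sg.
  rewrite le_eqVlt; apply/orP; left; apply/eqP. field; by rewrite gt_eqF.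
apply: nice_mul; first exact: nice_cst.
by apply: nice_mul; exact: nice_dot.
Qed.

End Prob.



Section M.
Variables (R : realType) (n : nat).
Implicit Types (a b c h : 'rV[R]_n).

Lemma dotDr a b c : dot c (a + b) = dot c a + dot c b.
Proof. by rewrite dotC dotDl !(dotC c). Qed.

Lemma sqD a b : sq (a + b) = sq a + 2 * dot a b + sq b.
Proof.
rewrite -!dotaa dotDl !dotDr (dotC b a); ring.
Qed.

Lemma normL_sq (L : R) a : 0 <= L -> normL L a ^+ 2 = L * sq a.
Proof. by move=> L0; rewrite /normL sqr_sqrtr // mulr_ge0 // sq_ge0. Qed.

Lemma VdistE (L : R) a b : 0 <= L -> Vdist L a b = L / 2 * sq (a - b).
Proof. by move=> L0; rewrite /Vdist normL_sq //; ring. Qed.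

Lemma sq_eq0 a : sq a = 0 -> a = 0.
Proof.
move=> H; apply/rowP => i; rewrite mxE.
have := @psumr_eq0P _ _ xpredT (fun i => a 0 i ^+ 2) (fun i _ => sqr_ge0 _) H i isT.
by move/eqP; rewrite sqrf_eq0 => /eqP.
Qed.

Lemma mirror_unique (L a : R) (g u u' : 'rV[R]_n) : 0 < L ->
  is_mirror_step L a g u u' -> u' = u - (a / L) *: g.
Proof.
move=> L0 Hm.
set xs := u - (a / L) *: g.
have H := Hm xs.
rewrite (VdistE _ _ (ltW L0)) (VdistE _ _ (ltW L0)) in H.
set w := u' - xs.
have E1 : u' - u = w + (xs - u) by rewrite /w addrA subrK.
have E2 : xs - u = (- (a / L)) *: g by rewrite /xs addrAC subrr add0r scaleNr.
have E3 : u' = w + xs by rewrite /w subrK.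
rewrite E1 sqD E2 dotZr sqZ in H.
rewrite E3 (dotC g (w + xs)) dotDl (dotC w) (dotC xs) in H.
idtac.
set c := a / L in H E2.
have Lc : a = L * c by rewrite /c; field; rewrite gt_eqF.
rewrite Lc in H.
have Hw : L / 2 * sq w <= 0.
  move: H. set S := sq g. set D := dot g w. set Q := dot g xs. set W := sq w.
  move=> H. lra.
have : sq w <= 0.
  by rewrite -(pmulr_rle0 _ (x := L / 2)) // divr_gt0.
move=> Hw2.
have : sq w = 0 by apply/eqP; rewrite eq_le Hw2 sq_ge0.
move/sq_eq0 => w0.
by rewrite E3 w0 add0r.
Qed.

End M.

Section Coef.
Variables (R : realType) (n : nat).
Hypothesis n0 : (0 < n)%N.

Lemma alphaS k : alpha (R:=R) n k.+1 = (k%:R + 2 * n%:R) / (2 * n%:R ^+ 2).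
Proof. by []. Qed.

Lemma AcoefS k : Acoef (R:=R) n k.+1 = Acoef n k + alpha n k.+1.
Proof. by rewrite /Acoef big_ord_recr. Qed.

Lemma Acoef_closed m : 4 * n%:R ^+ 2 * Acoef (R:=R) n m =
   4 * n%:R ^+ 2 - 4 * n%:R + m%:R * (m%:R - 1) + 4 * n%:R * m%:R.
Proof.
have nz : (n%:R : R) != 0 by rewrite pnatr_eq0 -lt0n.
elim: m => [|m IH].
  rewrite /Acoef big_ord1 /=; field => //.
rewrite AcoefS mulrDr IH alphaS; field => //.
Qed.

Lemma alpha_gt0 k : 0 < alpha (R:=R) n k.+1.
Proof.
rewrite alphaS divr_gt0 //.
  by rewrite ltr_wpDl // mulr_gt0 // ltr0n.
by rewrite mulr_gt0 // exprn_gt0 // ltr0n.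
Qed.

Lemma Acoef_ge0 k : 0 <= Acoef (R:=R) n k.
Proof.
have np : (0 : R) < n%:R by rewrite ltr0n.
have := Acoef_closed k.
have : (1 : R) <= n%:R by rewrite ler1n.
move=> n1 E.
have h : 0 <= 4 * n%:R ^+ 2 * Acoef (R:=R) n k.
  rewrite E.
  have hm : (0:R) <= k%:R * (k%:R - 1).
    case: k {E} => [|k]; first by rewrite mul0r.
    by rewrite -natr1 addrK mulr_ge0 // addr_ge0.
  have : (0:R) <= k%:R by exact: ler0n.
  nra.
have hp : 0 < 4 * (n%:R : R) ^+ 2 by rewrite mulr_gt0 // exprn_gt0.
by rewrite pmulr_rge0 in h.
Qed.

Lemma alpha_A k : n%:R ^+ 2 * alpha (R:=R) n k.+1 ^+ 2 <= Acoef n k.+1.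
Proof.
have np : (0 : R) < n%:R by rewrite ltr0n.
have hp : 0 < 4 * (n%:R : R) ^+ 2 by rewrite mulr_gt0 // exprn_gt0.
rewrite -(ler_pM2l hp) Acoef_closed alphaS.
have nz : (n%:R : R) != 0 by rewrite gt_eqF.
have -> : 4 * n%:R ^+ 2 * (n%:R ^+ 2 * ((k%:R + 2 * n%:R) / (2 * n%:R ^+ 2)) ^+ 2)
   = (k%:R + 2 * n%:R) ^+ 2 :> R.
  by field.
rewrite -natr1.
have : (0:R) <= k%:R by exact: ler0n.
nra.
Qed.

End Coef.



Lemma pt_ineq (R : realType) (A a L m p s r dl fy Sv : R) :
  0 < L -> 0 < A -> 0 <= a -> 0 < m -> m ^+ 2 * a ^+ 2 <= A -> `|s| <= dl ->
  A * (fy - (m * a / A * (a / L)) * m * (p + s) * p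
         + L / 2 * ((m * a / A * (a / L)) * m * (p + s)) ^+ 2)
  + L / 2 * (Sv + 2 * ((a / L) * m * (p + s)) * r + ((a / L) * m * (p + s)) ^+ 2)
  <= A * fy + L / 2 * Sv + (m ^+ 2 * a ^+ 2 / L) * dl ^+ 2
     + (m ^+ 2 * a ^+ 2 / L) * dl * `|p| + (a * m) * (p * r) + (a * m * dl) * `|r|.
Proof.
move=> L0 A0 a0 m0 aA sd.
set b := m ^+ 2 * a ^+ 2 / L.
have b0 : 0 <= b by rewrite /b divr_ge0 // ?mulr_ge0 ?sqr_ge0 // ltW.
have E1 : A * ((m * a / A * (a / L)) * m * (p + s) * p) = b * ((p + s) * p).
  by rewrite /b; field; rewrite !gt_eqF.
have E2 : A * (L / 2 * ((m * a / A * (a / L)) * m * (p + s)) ^+ 2)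
    = (b / 2) * ((m ^+ 2 * a ^+ 2) / A) * (p + s) ^+ 2.
  by rewrite /b; field; rewrite !gt_eqF.
have E3 : L / 2 * (Sv + 2 * ((a / L) * m * (p + s)) * r + ((a / L) * m * (p + s)) ^+ 2)
    = L / 2 * Sv + a * m * ((p + s) * r) + b / 2 * (p + s) ^+ 2.
  by rewrite /b; field; rewrite !gt_eqF.
set g := (m ^+ 2 * a ^+ 2) / A.
have g1 : g <= 1 by rewrite /g ler_pdivrMr // mul1r.
have g0 : 0 <= g by rewrite /g divr_ge0 ?mulr_ge0 ?sqr_ge0 // ltW.
rewrite mulrDr mulrBr E1 E2 E3.
have H1 : b / 2 * g * (p + s) ^+ 2 <= b / 2 * (p + s) ^+ 2.
  have X0 := sqr_ge0 (p + s).
  have h1 : 0 <= (1 - g) * (p + s) ^+ 2 by rewrite mulr_ge0 // subr_ge0.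
  have h2 : 0 <= b / 2 by rewrite divr_ge0.
  have := mulr_ge0 h2 h1.
  move=> h3; rewrite -subr_ge0; apply: le_trans h3 _.
  rewrite le_eqVlt; apply/orP; left; apply/eqP; ring.
have sp : s * p <= dl * `|p|.
  apply: le_trans (ler_norm _) _; rewrite normrM ler_wpM2r //.
have sr : s * r <= dl * `|r|.
  apply: le_trans (ler_norm _) _; rewrite normrM ler_wpM2r //.
have s2 : s ^+ 2 <= dl ^+ 2.
  have := normr_ge0 s; rewrite -(real_normK (num_real s)); nra.
have am0 : 0 <= a * m by rewrite mulr_ge0 // ltW.
have T1 : b * (s * p) <= b * (dl * `|p|) by apply: ler_wpM2l.
have T2 : a * m * (s * r) <= a * m * (dl * `|r|) by apply: ler_wpM2l.
have T3 : b * s ^+ 2 <= b * dl ^+ 2 by exact: (ler_wpM2l b0 s2).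
have : b / 2 * g * (p + s) ^+ 2 + b / 2 * (p + s) ^+ 2 - b * ((p + s) * p)
       <= b * (s * p) + b * s ^+ 2.
  have : b / 2 * g * (p + s) ^+ 2 + b / 2 * (p + s) ^+ 2 - b * ((p + s) * p)
       <= b * (p + s) ^+ 2 - b * ((p + s) * p) by lra.
  move=> h; apply: le_trans h _; rewrite le_eqVlt; apply/orP; left; apply/eqP; ring.
move=> H2.
have : a * m * ((p + s) * r) = a * m * (p * r) + a * m * (s * r) by ring.
rewrite -/g; lra.
Qed.

Unset Implicit Arguments. Set Strict Implicit.

Theorem lemma14 (R : realType) (n : nat)
  (f : 'rV[R]_n -> R) (grad : 'rV[R]_n -> 'rV[R]_n) (L delta : R)
  (d : measure_display) (T : measurableType d) (P : probability T R)
  (xs us es : nat -> 'rV[R]_n) (ds : nat -> R) (k : nat)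
  (e : T -> 'rV[R]_n) (dt : T -> R) (u1 x1 : T -> 'rV[R]_n) (u : 'rV[R]_n) :
  (0 < n)%N -> 0 < L ->
  (* f convex *)
  (forall (x y : 'rV[R]_n) (t : R), 0 <= t <= 1 ->
      f (t *: x + (1 - t) *: y) <= t * f x + (1 - t) * f y) ->
  (* f differentiable with gradient grad *)
  (forall y : 'rV[R]_n, differentiable f y /\
      forall h : 'rV[R]_n, 'd f y h = dot (grad y) h) ->
  (* L-Lipschitz gradient w.r.t. the Euclidean norm *)
  (forall x y : 'rV[R]_n, norm2 (grad x - grad y) <= L * norm2 (x - y)) ->
  (* iterations 1..k have been realized *)
  mtm_history L delta grad xs us es ds k ->
  (* conditional law of (e_{k+1}, delta~_{k+1}) given the past *)
  (forall i : 'I_n, measurable_fun setT (fun w => e w 0 i)) ->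
  measurable_fun setT dt ->
  (forall w, norm2 (e w) = 1) ->
  (forall w, `|dt w| <= delta) ->
  (forall i j : 'I_n, i != j -> (\int[P]_w (e w 0 i * e w 0 j)%:E = 0)%E) ->
  (forall i : 'I_n, (\int[P]_w (e w 0 i ^+ 2)%:E = (n%:R^-1)%:E)%E) ->
  (* iteration k+1 *)
  (forall w, is_mirror_step L (alpha n k.+1)
       (gtilde grad (ystep k (xs k) (us k)) (e w) (dt w)) (us k) (u1 w)) ->
  (forall w, x1 w = xstep k (ystep k (xs k) (us k)) (us k) (u1 w)) ->
  ((Acoef n k.+1)%:E * \int[P]_w (f (x1 w))%:E - (Acoef n k * f (xs k))%:E
     + \int[P]_w (Vdist L u (u1 w))%:E - (Vdist L u (us k))%:E
   <= (alpha n k.+1 * f u + Acoef n k.+1 / L * delta ^+ 2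
       + Acoef n k.+1 * delta * (norm2 (grad (ystep k (xs k) (us k))) / (L * Num.sqrt n%:R))
       + alpha n k.+1 * delta * (Num.sqrt n%:R / Num.sqrt L) * normL L (us k - u))%:E)%E.
Proof.
move=> n0 L0 Hc Hd HL _ me mdt hen dtb heo hes Hm Hx.
set y := ystep k (xs k) (us k).
set uk := us k.
set xk := xs k.
set a := alpha n k.+1.
set A := Acoef n k.+1.
set A' := Acoef n k.
set G := grad y.
set m := (n%:R : R).
have a0 : 0 < a by exact: alpha_gt0.
have A'0 : 0 <= A' by exact: Acoef_ge0.
have AS : A = A' + a by rewrite /A AcoefS.
have A0 : 0 < A by rewrite AS; lra.
have aA : m ^+ 2 * a ^+ 2 <= A by exact: alpha_A.
have mp : 0 < m by rewrite ltr0n.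
have dl0 : 0 <= delta.
  have [[w _]|Hn] := pselect (exists w : T, True).
    by apply: le_trans (dtb w); exact: normr_ge0.
  exfalso.
  have E : [set: T] = set0 by apply/seteqP; split => // w _; apply: Hn; exists w.
  have H1 := @probability_setT _ _ _ P.
  rewrite E in H1.
  have := etrans (esym H1) (measure0 P).
  by move/eqP; rewrite eqe oner_eq0.
have u1E w : u1 w = uk - (a / L) *: gtilde grad y (e w) (dt w).
  exact: (mirror_unique L0 (Hm w)).
pose p w := dot G (e w).
pose r w := dot (u - uk) (e w).
have gE w : gtilde grad y (e w) (dt w) = (m * (p w + dt w)) *: e w by [].
set kap := m * a / A * (a / L).
have x1y w : x1 w - y = (- (kap * m * (p w + dt w))) *: e w.
  rewrite Hx /xstep -/y -/uk -/a -/A u1E gE.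
  apply/rowP => i; rewrite !mxE /kap; ring.
pose Fw w := f y - kap * m * (p w + dt w) * p w + L / 2 * (kap * m * (p w + dt w)) ^+ 2.
have Fle w : f (x1 w) <= Fw w.
  have := descent_up Hd HL y (x1 w - y).
  rewrite addrC subrK (x1y w) dotZr sqZ (sq_e hen) -/G -/(p w).
  move=> h; apply: le_trans h _; rewrite le_eqVlt; apply/orP; left; apply/eqP.
  rewrite /Fw; ring.
pose Vw w := L / 2 * (sq (u - uk) + 2 * ((a / L) * m * (p w + dt w)) * r w
                  + ((a / L) * m * (p w + dt w)) ^+ 2).
have VE w : Vdist L u (u1 w) = Vw w.
  rewrite (VdistE _ _ (ltW L0)) u1E gE.
  have -> : u - (uk - (a / L) *: ((m * (p w + dt w)) *: e w))
            = (u - uk) + ((a / L) * m * (p w + dt w)) *: e w.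
    by apply/rowP => i; rewrite !mxE; ring.
  rewrite sqD dotZr sqZ (sq_e hen) -/(r w) /Vw; ring.
have VkE : Vdist L u uk = L / 2 * sq (u - uk) by rewrite (VdistE _ _ (ltW L0)).
have np : nice p by exact: (nice_dot me hen G).
have nr : nice r by exact: (nice_dot me hen (u - uk)).
have ndt : nice dt by split => //; exists delta.
have nF : nice Fw.
  rewrite /Fw; repeat first [ exact: nice_cst | eassumption | apply: nice_add
    | apply: nice_opp | apply: nice_mul | apply: nice_sqr ].
have nV : nice Vw.
  rewrite /Vw; repeat first [ exact: nice_cst | eassumption | apply: nice_add
    | apply: nice_opp | apply: nice_mul | apply: nice_sqr ].
have I1le : (\int[P]_w (f (x1 w))%:E <= (\int[P]_w Fw w)%:E)%E.
  rewrite -(RintE P nF); apply: le_integral_nm => w; rewrite lee_fin; exact: Fle.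
have I2E : (\int[P]_w (Vdist L u (u1 w))%:E = (\int[P]_w Vw w)%:E)%E.
  rewrite -(RintE P nV); apply: eq_integral => w _; by rewrite VE.
apply: le_trans (_ : _ <= (A * \int[P]_w Fw w - A' * f xk + \int[P]_w Vw w
                            - Vdist L u uk)%:E)%E _.
  rewrite EFinB; apply: leeB => //.
  rewrite EFinD I2E; apply: leeD => //.
  rewrite EFinB; apply: leeB => //.
  rewrite EFinM; apply: lee_wpmul2l => //; exact: ltW.
rewrite lee_fin.
set bt := m ^+ 2 * a ^+ 2 / L.
pose Gb w := (A * f y + L / 2 * sq (u - uk) + bt * delta ^+ 2)
   + (bt * delta) * `|p w| + (a * m) * (p w * r w) + (a * m * delta) * `|r w|.
have nAF : nice (fun w => A * Fw w) by apply: nice_mul => //; exact: nice_cst.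
have nGb : nice Gb.
  rewrite /Gb; repeat first [ exact: nice_cst | eassumption | apply: nice_add
    | apply: nice_abs | apply: nice_mul ].
have HAV : A * \int[P]_w Fw w + \int[P]_w Vw w <= \int[P]_w Gb w.
  rewrite -RintZ // -RintD //.
  apply: Rintle => //; first exact: nice_add.
  move=> w; rewrite /Fw /Vw /kap /Gb /bt.
  exact: (pt_ineq _ _ _ _ L0 A0 (ltW a0) mp aA (dtb w)).
have EG : \int[P]_w Gb w = (A * f y + L / 2 * sq (u - uk) + bt * delta ^+ 2)
   + (bt * delta) * \int[P]_w `|p w| + (a * m) * \int[P]_w (p w * r w)
   + (a * m * delta) * \int[P]_w `|r w|.
  rewrite /Gb Rint_lin //; [exact: nice_abs | exact: nice_mul | exact: nice_abs].
have hEp : \int[P]_w `|p w| <= norm2 G / Num.sqrt m := E_abs_dot n0 me hen heo hes G.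
have hEr : \int[P]_w `|r w| <= norm2 (u - uk) / Num.sqrt m :=
  E_abs_dot n0 me hen heo hes (u - uk).
have hEpr : \int[P]_w (p w * r w) = dot G (u - uk) / m := E_dot2 me hen heo hes G (u - uk).
have cvx : A * f y + a * dot G (u - uk) <= A' * f xk + a * f u.
  have h1 := conv_grad (ltW L0) Hc Hd HL y xk.
  have h2 := conv_grad (ltW L0) Hc Hd HL y u.
  have yE : A *: y = a *: uk + A' *: xk.
    by rewrite /y /ystep -/a -/A -/A' -/uk -/xk scalerA mulfV ?scale1r // gt_eqF.
  have dy : A * dot G y = a * dot G uk + A' * dot G xk.
    by rewrite -dotZr yE dotDr !dotZr.
  rewrite -/G !dotBr in h1 h2 *.
  have := ler_wpM2l A'0 h1; have := ler_wpM2l (ltW a0) h2.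
  rewrite AS in dy *. move=> q1 q2. nra.
set q := Num.sqrt m. set l := Num.sqrt L.
have q0 : 0 < q by rewrite sqrtr_gt0.
have l0 : 0 < l by rewrite sqrtr_gt0.
have qq : q ^+ 2 = m by rewrite sqr_sqrtr // ltW.
have ll : l ^+ 2 = L by rewrite sqr_sqrtr // ltW.
set NG := norm2 G. set NV := norm2 (u - uk).
have NG0 : 0 <= NG by exact: norm2_ge0.
have NV0 : 0 <= NV by exact: norm2_ge0.
have nLE : normL L (uk - u) = l * NV.
  rewrite /normL -/(sq _) (_ : uk - u = (-1) *: (u - uk)); last first.
    by apply/rowP => i; rewrite !mxE; ring.
  by rewrite sqZ sqrrN expr1n mul1r sqrtrM // ltW.
rewrite nLE VkE.
have bt0 : 0 <= bt by rewrite /bt divr_ge0 // ?mulr_ge0 ?sqr_ge0 // ltW.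
have btA : bt <= A / L by rewrite /bt ler_wpM2r // invr_ge0 ltW.
have T0 : bt * delta ^+ 2 <= A / L * delta ^+ 2 by rewrite ler_wpM2r // sqr_ge0.
have T1 : bt * delta * \int[P]_w `|p w| <= A * delta * (NG / (L * q)).
  apply: le_trans (ler_wpM2l (mulr_ge0 bt0 dl0) hEp) _.
  have -> : bt * delta * (NG / q) = bt * (delta * NG / q) by field; rewrite gt_eqF.
  have -> : A * delta * (NG / (L * q)) = A / L * (delta * NG / q).
    by field; rewrite !gt_eqF.
  by rewrite ler_wpM2r // divr_ge0 // ?mulr_ge0 // ltW.
have T2 : a * m * \int[P]_w (p w * r w) = a * dot G (u - uk).
  by rewrite hEpr; field; rewrite gt_eqF.
have amd : 0 <= a * m * delta by rewrite !mulr_ge0 // ltW.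
have T3 : a * m * delta * \int[P]_w `|r w| <= a * delta * (q / l) * (l * NV).
  apply: le_trans (ler_wpM2l amd hEr) _.
  rewrite le_eqVlt; apply/orP; left; apply/eqP.
  have mq : m / q = q by rewrite -qq expr2 mulfK // gt_eqF.
  rewrite (_ : a * m * delta * (NV / q) = a * delta * NV * (m / q)); last by ring.
  by rewrite mq; field; rewrite gt_eqF.
have := HAV; rewrite EG => HAV'.
lra.
Qed.
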